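(* Let $N\to\infty$, $p=p(N)$ with $p(1-p)N\to\infty$, and $S=S(N)$, $h=h(N)$ such that $N-S$ and $N+S$ are nonnegative integers, $2(2p(1-p)N)^{1/2}<h=o((p(1-p)N)^{2/3})$ and $Sh=o(N(p(1-p)N)^{1/2})$. Let $X_1\sim B(N-S,p)$ and $X_2\sim B(N+S,1-p)$ be independent with means $\mu_1,\mu_2$. Then $$\mathbb{P}(X_1+X_2\ge\mu_1+\mu_2+h)<\frac{\sqrt{2p(1-p)N}}{h}\exp\!\left(-\frac{h^2}{4p(1-p)N}+3+o(1)\right),$$ where $o(1)\to0$ as $N\to\infty$.
   Context: $B(n,p)$ denotes a binomial random variable with parameters $n$ and $p$. *)

(* Defs.v *)
From Stdlib Require Import Reals.
Open Scope R_scope.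

Definition binom_pmf (n : nat) (q : R) (k : nat) : R :=
  C n k * q ^ k * (1 - q) ^ (n - k).

Definition sum_binom_tail (n1 : nat) (q1 : R) (n2 : nat) (q2 : R) (t : R) : R :=
  sum_f_R0 (fun k1 =>
    sum_f_R0 (fun k2 =>
      binom_pmf n1 q1 k1 * binom_pmf n2 q2 k2 *
      (if Rle_dec t (INR k1 + INR k2) then 1 else 0)) n2) n1.

(* N = ((N-S)+(N+S))/2 and S = ((N+S)-(N-S))/2, given n1 = N-S, n2 = N+S. *)
Definition Npar (n1 n2 : nat) : R := (INR n1 + INR n2) / 2.
Definition Spar (n1 n2 : nat) : R := (INR n2 - INR n1) / 2.

(* Main.v *)
Require Import Defs.
From Stdlib Require Import Reals.
Open Scope R_scope.
From Stdlib Require Import Lra Lia Psatz ZArith.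
From Coquelicot Require Coquelicot.

Module Tay.
Import Coquelicot.Coquelicot.

Lemma exp_le x y : x <= y -> exp x <= exp y.
Proof. intros [H|H]; [left; apply exp_increasing; auto| subst; lra]. Qed.

Lemma Dn_exp k x : Derive_n exp k x = exp x.
Proof. apply is_derive_n_unique, is_derive_n_exp. Qed.

Lemma exn_exp k x : ex_derive_n exp k x.
Proof.
  destruct k as [|k]; [exact I|]. exists (exp x). exact (is_derive_n_exp (S k) x).
Qed.

Lemma exp_upper_pos y : 0 < y <= 1 -> exp y <= 1 + y + y^2/2 + y^3/2.
Proof.
  intros Hy.
  destruct (Taylor_Lagrange exp 2 0 y) as [z [Hz E]]; [lra| intros; apply exn_exp |].
  rewrite E. cbn [sum_f_R0]. rewrite !Dn_exp, exp_0.
  assert (exp z <= 3).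
  { apply Rle_trans with (exp 1). apply exp_le; lra. apply exp_le_3. }
  assert (0 <= y*y*y) by (apply Rmult_le_pos; [|lra]; apply Rmult_le_pos; lra).
  replace (INR (Factorial.fact 0)) with 1 by reflexivity.
  replace (INR (Factorial.fact 1)) with 1 by reflexivity.
  replace (INR (Factorial.fact 2)) with 2 by (simpl; lra).
  replace (INR (Factorial.fact 3)) with 6 by (simpl; lra).
  replace ((y-0)) with y by lra.
  nra.
Qed.

Lemma exp_upper_neg y : -1 <= y < 0 -> exp y <= 1 + y + y^2/2 - y^3/2.
Proof.
  intros Hy.
  destruct (Taylor_Lagrange exp 2 y 0) as [z [Hz E]]; [lra| intros; apply exn_exp |].
  cbn [sum_f_R0] in E. rewrite !Dn_exp, exp_0 in E.
  replace (INR (Factorial.fact 0)) with 1 in E by reflexivity.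
  replace (INR (Factorial.fact 1)) with 1 in E by reflexivity.
  replace (INR (Factorial.fact 2)) with 2 in E by (simpl; lra).
  replace (INR (Factorial.fact 3)) with 6 in E by (simpl; lra).
  assert (0 < exp z) by apply exp_pos.
  assert (0 < exp y) by apply exp_pos.
  remember (-y) as s eqn:Hs0.
  assert (Hs : 0 < s <= 1) by lra.
  replace (0 - y) with s in E by lra.
  assert (Hc : 0 <= s*s*s) by (apply Rmult_le_pos; [|lra]; apply Rmult_le_pos; lra).
  assert (E2 : exp y * (1 + s + s*s/2) <= 1).
  { assert (0 <= s * (s * (s * 1)) / 6 * exp z).
    { apply Rmult_le_pos; [|lra]. simpl. nra. }
    rewrite E. simpl. nra. }
  assert (P : 1 <= (1 + s + s*s/2) * (1 - s + s^2*/2 + s^3*/2)).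
  { simpl. nra. }
  assert (HA: 0 < 1 + s + s*s/2) by nra.
  unfold Rdiv in *.
  assert (Hg : exp y <= 1 - s + s^2*/2 + s^3*/2).
  { apply Rmult_le_reg_l with (1 + s + s*s/2); auto. nra. }
  replace (1 + y + y^2*/2 - y^3*/2) with (1 - s + s^2*/2 + s^3*/2) by (rewrite Hs0; ring).
  exact Hg.
Qed.

Lemma exp_upper y : -1 <= y <= 1 -> exp y <= 1 + y + y^2/2 + Rabs y ^3/2.
Proof.
  intros Hy.
  destruct (Rtotal_order y 0) as [H|[H|H]].
  - rewrite Rabs_left by lra. replace ((-y)^3) with (-(y^3)) by ring.
    pose proof (exp_upper_neg y). lra.
  - subst. rewrite exp_0, Rabs_R0. simpl. lra.
  - rewrite Rabs_right by lra. apply exp_upper_pos; lra.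
Qed.

Lemma mgf_bound p t : 0 <= p <= 1 -> Rabs t <= 1 ->
  p * exp (t * (1 - p)) + (1 - p) * exp (- (t * p)) <=
  exp (p * (1 - p) * t^2 / 2 + p * (1 - p) * Rabs t ^ 3).
Proof.
  intros Hp Ht.
  assert (A1 : Rabs (t*(1-p)) <= 1).
  { rewrite Rabs_mult, (Rabs_right (1-p)) by lra.
    pose proof (Rabs_pos t). nra. }
  assert (A2 : Rabs (-(t*p)) <= 1).
  { rewrite Rabs_Ropp, Rabs_mult, (Rabs_right p) by lra.
    pose proof (Rabs_pos t). nra. }
  pose proof (exp_upper (t*(1-p)) ltac:(apply Rabs_le_between; auto)) as E1.
  pose proof (exp_upper (-(t*p)) ltac:(apply Rabs_le_between; auto)) as E2.
  rewrite Rabs_mult, (Rabs_right (1-p)) in E1 by lra.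
  rewrite Rabs_Ropp, Rabs_mult, (Rabs_right p) in E2 by lra.
  eapply Rle_trans; [|apply exp_ineq1_le].
  set (a := Rabs t) in *. assert (0 <= a) by apply Rabs_pos.
  assert (t^2 = a^2) by (unfold a; rewrite <- Rsqr_pow2, <- Rsqr_pow2, Rsqr_abs; reflexivity).
  assert (Hq: 0 <= p*(1-p) * a^3) by (apply Rmult_le_pos; [nra| apply pow_le; lra]).
  unfold Rdiv in *.
  assert (p * (1 + t*(1-p) + (t*(1-p))^2*/2 + (a*(1-p))^3*/2) +
          (1-p) * (1 + -(t*p) + (-(t*p))^2*/2 + (a*p)^3*/2)
          = 1 + p*(1-p)*t^2*/2 + p*(1-p)*a^3 * ((1-p)^2+p^2)*/2) by ring.
  assert (p*(1-p)*a^3 * ((1-p)^2+p^2)*/2 <= p*(1-p)*a^3).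
  { assert (0 <= p*(1-p)) by nra. assert ((1-p)^2+p^2 <= 1) by nra. nra. }
  assert (p * exp (t*(1-p)) <= p * (1 + t*(1-p) + (t*(1-p))^2*/2 + (a*(1-p))^3*/2))
    by (apply Rmult_le_compat_l; lra).
  assert ((1-p) * exp (-(t*p)) <= (1-p) * (1 + -(t*p) + (-(t*p))^2*/2 + (a*p)^3*/2))
    by (apply Rmult_le_compat_l; lra).
  lra.
Qed.

End Tay.
Import Tay.

Lemma exp_nat n x : exp (INR n * x) = exp x ^ n.
Proof.
  induction n as [|n IH].
  - simpl. rewrite Rmult_0_l, exp_0; reflexivity.
  - rewrite S_INR, Rmult_plus_distr_r, exp_plus, IH, Rmult_1_l. simpl. ring.
Qed.

Lemma binom_mgf n r t :
  sum_f_R0 (fun k => binom_pmf n r k * exp (t * INR k)) n = (r * exp t + (1 - r)) ^ n.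
Proof.
  rewrite binomial. apply sum_eq. intros k _. unfold binom_pmf.
  rewrite Rmult_comm with (r1 := t), exp_nat, Rpow_mult_distr. ring.
Qed.

Lemma tilt n r t k : (k <= n)%nat -> 0 < r * exp t + (1 - r) ->
  binom_pmf n r k =
  (r * exp t + (1 - r)) ^ n * binom_pmf n (r * exp t / (r * exp t + (1 - r))) k
   * exp (- (t * INR k)).
Proof.
  intros Hk HD. set (D := r * exp t + (1 - r)) in *.
  unfold binom_pmf.
  replace (1 - r * exp t / D) with ((1 - r) * / D) by (unfold D in *; field; apply Rgt_not_eq; lra).
  unfold Rdiv. rewrite !Rpow_mult_distr, !pow_inv.
  replace (D ^ n) with (D ^ k * D ^ (n - k)) by (rewrite <- pow_add; f_equal; lia).
  replace (exp (- (t * INR k))) with (/ (exp t ^ k)).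
  2:{ rewrite <- exp_nat, <- exp_Ropp. f_equal. ring. }
  assert (0 < D ^ k) by (apply pow_lt; lra).
  assert (0 < D ^ (n-k)) by (apply pow_lt; lra).
  assert (0 < exp t ^ k) by (apply pow_lt, exp_pos).
  field. lra.
Qed.

Definition ind (b x : R) : R := if Rle_dec b x then 1 else 0.

Lemma geom_ind t b N : 0 < t ->
  sum_f_R0 (fun k => exp (- (t * INR k)) * ind b (INR k)) N <= exp (- (t * b)) / (1 - exp (- t)).
Proof.
  intros Ht.
  set (x := exp (-t)).
  assert (Hx : 0 < x < 1).
  { split. apply exp_pos. unfold x. rewrite <- exp_0. apply exp_increasing. lra. }
  assert (Hxk : forall k, exp (- (t * INR k)) = x ^ k).
  { intros. unfold x. rewrite <- exp_nat. f_equal. ring. }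
  set (u := fun n => sum_f_R0 (fun k => exp (- (t * INR k)) * ind b (INR k)) n).
  assert (Key : forall n, (INR n < b -> u n = 0) /\
     (b <= INR n -> (1 - x) * u n + x ^ (S n) <= exp (- (t * b)))).
  { induction n as [|n IH].
    - unfold u; cbn [sum_f_R0 INR]. rewrite Rmult_0_r, Ropp_0, exp_0. unfold ind.
      destruct (Rle_dec b 0); split; intros; try lra.
      rewrite Rmult_1_l, Rmult_1_r.
      assert (exp (- (t*b)) >= 1).
      { rewrite <- exp_0. destruct (Req_dec b 0). subst. rewrite Rmult_0_r, Ropp_0. lra.
        left. apply exp_increasing. nra. }
      lra.
    - destruct IH as [IH1 IH2].
      assert (Hu : u (S n) = u n + x ^ (S n) * ind b (INR (S n))).
      { unfold u. cbn [sum_f_R0]. rewrite (Hxk (S n)). reflexivity. }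
      assert (HX : x ^ S (S n) = x * x ^ S n) by reflexivity.
      assert (HX0 : 0 < x ^ S n) by (apply pow_lt; lra).
      rewrite S_INR in *. unfold ind in Hu.
      destruct (Rle_dec b (INR n + 1)) as [Hb|Hb]; rewrite Rmult_1_r in Hu || rewrite Rmult_0_r in Hu;
        split; intros; try lra.
      + rewrite Hu, HX. destruct (Rle_dec b (INR n)) as [Hb'|Hb'].
        * specialize (IH2 Hb'). nra.
        * rewrite IH1 by lra.
          assert (x ^ S n <= exp (- (t*b))).
          { rewrite <- Hxk. destruct (Req_dec b (INR (S n))).
            - rewrite H0. lra.
            - left. apply exp_increasing. rewrite S_INR in *. nra. }
          nra.
      }
  destruct (Rle_dec b (INR N)) as [Hb|Hb].
  - destruct (Key N) as [_ K]. specialize (K Hb). fold (u N).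
    apply Rmult_le_reg_l with (1 - x); [lra|].
    replace ((1-x) * (exp (-(t*b)) / (1-x))) with (exp (-(t*b))) by (field; apply Rgt_not_eq; lra).
    assert (0 < x ^ S N) by (apply pow_lt; lra). lra.
  - destruct (Key N) as [K _]. fold (u N). rewrite K by lra.
    apply Rlt_le, Rdiv_lt_0_compat. apply exp_pos. lra.
Qed.


Lemma C_pos n k : 0 < C n k.
Proof.
  unfold C. apply Rdiv_lt_0_compat; [|apply Rmult_lt_0_compat];
  apply lt_0_INR, Factorial.lt_O_fact.
Qed.

Lemma pmf_nonneg n r k : 0 <= r <= 1 -> 0 <= binom_pmf n r k.
Proof.
  intros Hr. unfold binom_pmf. pose proof (C_pos n k).
  apply Rmult_le_pos; [apply Rmult_le_pos|]; try lra; apply pow_le; lra.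
Qed.

Lemma ind_nonneg b x : 0 <= ind b x.
Proof. unfold ind. destruct Rle_dec; lra. Qed.

Lemma D_pos r t : 0 <= r <= 1 -> 0 < t -> 1 <= r * exp t + (1 - r).
Proof.
  intros Hr Ht. assert (1 < exp t) by (rewrite <- exp_0; apply exp_increasing; lra). nra.
Qed.

Lemma tail_one n r t b Pm : 0 <= r <= 1 -> 0 < t -> 0 <= Pm ->
  (forall k, (k <= n)%nat -> binom_pmf n (r * exp t / (r * exp t + (1 - r))) k <= Pm) ->
  sum_f_R0 (fun k => binom_pmf n r k * ind b (INR k)) n <=
  (r * exp t + (1 - r)) ^ n * Pm * (exp (- (t * b)) / (1 - exp (- t))).
Proof.
  intros Hr Ht HPm HP.
  pose proof (D_pos r t Hr Ht) as HD.
  set (D := r * exp t + (1 - r)) in *.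
  assert (HDn : 0 <= D ^ n) by (apply pow_le; lra).
  eapply Rle_trans.
  - apply sum_Rle with (Bn := fun k => exp (- (t * INR k)) * ind b (INR k) * (D ^ n * Pm)).
    intros k Hk. rewrite (tilt n r t k Hk) by (fold D; lra). fold D.
    pose proof (HP k Hk). pose proof (ind_nonneg b (INR k)).
    pose proof (exp_pos (- (t * INR k))).
    assert (0 <= exp (- (t * INR k)) * ind b (INR k)) by (apply Rmult_le_pos; lra).
    assert (D ^ n * binom_pmf n (r * exp t / D) k <= D ^ n * Pm) by (apply Rmult_le_compat_l; lra).
    nra.
  - rewrite <- scal_sum.
    apply Rmult_le_compat_l; [|apply geom_ind; auto].
    apply Rmult_le_pos; auto.
Qed.

Lemma sum_swap (f : nat -> nat -> R) n m :
  sum_f_R0 (fun i => sum_f_R0 (fun j => f i j) m) n =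
  sum_f_R0 (fun j => sum_f_R0 (fun i => f i j) n) m.
Proof.
  induction n as [|n IH].
  - simpl. reflexivity.
  - cbn [sum_f_R0]. rewrite IH, <- plus_sum. reflexivity.
Qed.

Lemma dtail n1 r1 n2 r2 t a Pm : 0 <= r1 <= 1 -> 0 <= r2 <= 1 -> 0 < t -> 0 <= Pm ->
  (forall k, (k <= n2)%nat -> binom_pmf n2 (r2 * exp t / (r2 * exp t + (1 - r2))) k <= Pm) ->
  sum_f_R0 (fun k1 => sum_f_R0 (fun k2 =>
      binom_pmf n1 r1 k1 * binom_pmf n2 r2 k2 *
      (if Rle_dec a (INR k1 + INR k2) then 1 else 0)) n2) n1 <=
  (r1 * exp t + (1 - r1)) ^ n1 * (r2 * exp t + (1 - r2)) ^ n2 * Pm *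
    (exp (- (t * a)) / (1 - exp (- t))).
Proof.
  intros H1 H2 Ht HPm HP.
  assert (Hx : exp (- t) < 1) by (rewrite <- exp_0; apply exp_increasing; lra).
  set (K := (r2 * exp t + (1 - r2)) ^ n2 * Pm * (exp (- (t * a)) / (1 - exp (- t)))).
  eapply Rle_trans.
  - apply sum_Rle with (Bn := fun k1 => binom_pmf n1 r1 k1 * exp (t * INR k1) * K).
    intros k1 _.
    replace (sum_f_R0 (fun k2 => binom_pmf n1 r1 k1 * binom_pmf n2 r2 k2 *
      (if Rle_dec a (INR k1 + INR k2) then 1 else 0)) n2)
    with (binom_pmf n1 r1 k1 * sum_f_R0 (fun k2 => binom_pmf n2 r2 k2 * ind (a - INR k1) (INR k2)) n2).
    2:{ rewrite scal_sum. apply sum_eq. intros k2 _. unfold ind.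
        destruct (Rle_dec a (INR k1 + INR k2)); destruct (Rle_dec (a - INR k1) (INR k2)); try lra. }
    rewrite Rmult_assoc. apply Rmult_le_compat_l; [apply pmf_nonneg; auto|].
    eapply Rle_trans; [apply (tail_one n2 r2 t (a - INR k1) Pm); auto|].
    unfold K. right.
    replace (- (t * (a - INR k1))) with (t * INR k1 + - (t * a)) by ring.
    rewrite exp_plus. unfold Rdiv. ring.
  - rewrite <- scal_sum. rewrite binom_mgf. unfold K. right. ring.
Qed.


Lemma nat_floor x : 0 <= x -> exists J : nat, INR J <= x < INR J + 1.
Proof.
  intros Hx. destruct (archimed x) as [H1 H2].
  assert (Hz : (1 <= up x)%Z).
  { assert (0 < up x)%Z by (apply lt_IZR; lra). lia. }
  exists (Z.to_nat (up x - 1)).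
  rewrite INR_IZR_INZ, Z2Nat.id by lia. rewrite minus_IZR. simpl. lra.
Qed.

Lemma pmf_total n r : sum_f_R0 (binom_pmf n r) n = 1.
Proof.
  unfold binom_pmf. rewrite <- binomial. replace (r + (1 - r)) with 1 by ring. apply pow1.
Qed.

Lemma pmf_ratio n r i : (i < n)%nat ->
  binom_pmf n r (S i) * INR (S i) * (1 - r) = binom_pmf n r i * INR (n - i) * r.
Proof.
  intros Hi. unfold binom_pmf. rewrite pascal_step3 by auto.
  replace (n - i)%nat with (S (n - S i)) at 2 by lia.
  assert (0 < INR (S i)) by (apply lt_0_INR; lia).
  simpl pow. field. lra.
Qed.

Lemma sum_mono (f : nat -> R) a b : (forall k, 0 <= f k) -> (a <= b)%nat ->
  sum_f_R0 f a <= sum_f_R0 f b.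
Proof.
  intros Hf Hab. induction Hab as [|b Hab IH]. lra.
  simpl. specialize (Hf (S b)). lra.
Qed.

Lemma sub_sum (f : nat -> R) c J n : (forall k, 0 <= f k) -> (c + J <= n)%nat ->
  sum_f_R0 (fun j => f (c + j)%nat) J <= sum_f_R0 f n.
Proof.
  intros Hf H. destruct c as [|c].
  - simpl. apply sum_mono; auto.
  - rewrite (tech2 f c n) by lia.
    assert (0 <= sum_f_R0 f c) by (apply cond_pos_sum; auto).
    assert (sum_f_R0 (fun j => f (S c + j)%nat) J <= sum_f_R0 (fun i => f (S c + i)%nat) (n - S c)).
    { apply sum_mono; auto. lia. }
    lra.
Qed.

Lemma bernoulli a J : 0 <= a <= 1 -> 1 - INR J * a <= (1 - a) ^ J.
Proof.
  intros Ha. induction J as [|J IH].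
  - simpl. lra.
  - rewrite S_INR. simpl. assert (0 <= INR J) by apply pos_INR.
    assert (0 <= (1-a)^J) by (apply pow_le; lra). nra.
Qed.

Lemma pow_anti a i j : 0 <= a <= 1 -> (i <= j)%nat -> a ^ j <= a ^ i.
Proof.
  intros Ha Hij. induction Hij as [|j Hij IH]. lra.
  simpl. assert (0 <= a ^ j) by (apply pow_le; lra). nra.
Qed.

Lemma maxpmf_up n r m : 0 < r < 1 -> 1 <= INR n * r * (1 - r) -> (m <= n)%nat ->
  INR n * r <= INR m ->
  binom_pmf n r m <= 2 * sqrt 2 / sqrt (INR n * r * (1 - r)).
Proof.
  intros Hr Hv Hm Hmean.
  set (v := INR n * r * (1 - r)) in *.
  destruct (nat_floor (sqrt (v / 2))) as [J [HJ1 HJ2]]. { apply sqrt_pos. }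
  assert (Hs : sqrt (v/2) <= v).
  { assert (sqrt (v/2) <= sqrt (v*v)) by (apply sqrt_le_1_alt; unfold Rdiv; nra). rewrite sqrt_square in H by lra. exact H. }
  assert (Hv2 : INR J * INR J <= v / 2).
  { assert (0 <= INR J) by apply pos_INR.
    rewrite <- (sqrt_sqrt (v/2)) by lra. apply Rmult_le_compat; lra. }
  assert (HJv : INR J <= v) by lra.
  assert (HJnr : INR J <= INR n * r).
  { assert (v <= INR n * r). { unfold v. assert (0 <= INR n * r) by (apply Rmult_le_pos; [apply pos_INR|lra]). nra. } lra. }
  assert (HJm : (J <= m)%nat) by (apply INR_le; lra).
  set (P := binom_pmf n r).
  set (a := INR J / v).
  assert (Ha : 0 <= a <= 1).
  { unfold a. split. unfold Rdiv; apply Rmult_le_pos; [apply pos_INR|apply Rlt_le, Rinv_0_lt_compat; lra].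
    apply Rmult_le_reg_r with v; [lra|]. unfold Rdiv. rewrite Rmult_assoc, Rinv_l by lra. lra. }
  assert (Hdec : forall j, (j <= J)%nat -> P m * (1 - a) ^ j <= P (m - j)%nat).
  { induction j as [|j IH]; intros Hj.
    - simpl. rewrite Nat.sub_0_r. lra.
    - specialize (IH ltac:(lia)).
      set (i := (m - S j)%nat).
      assert (Hi : (S i = m - j)%nat) by (unfold i; lia).
      assert (Hin : (i < n)%nat) by (unfold i; lia).
      pose proof (pmf_ratio n r i Hin) as Rt. fold P in Rt. rewrite Hi in Rt.
      (* P i * (n-i) r = P(m-j) (m-j) (1-r) >= P(m-j) (1-a) (n-i) r *)
      assert (HSi : INR n * r - INR j <= INR (m - j)).
      { rewrite minus_INR by lia. lra. }
      assert (Hni : INR (n - i) <= INR n * (1 - r) + INR J).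
      { unfold i. rewrite minus_INR by lia. rewrite minus_INR by lia. rewrite S_INR.
        assert (INR (S j) <= INR J) by (apply le_INR; lia). rewrite S_INR in *. lra. }
      assert (HjJ : INR j + 1 <= INR J) by (rewrite <- S_INR; apply le_INR; lia).
      assert (Key : (1 - a) * (INR (n - i) * r) <= INR (m - j) * (1 - r)).
      { assert (0 <= INR (n - i)) by apply pos_INR.
        assert ((1 - a) * (INR (n - i) * r) <= (1 - a) * ((INR n * (1 - r) + INR J) * r)).
        { apply Rmult_le_compat_l; [lra|]. apply Rmult_le_compat_r; lra. }
        assert ((INR n * r - INR J) * (1 - r) <= INR (m - j) * (1 - r)).
        { apply Rmult_le_compat_r; lra. }
        assert (E : (1 - a) * ((INR n * (1 - r) + INR J) * r) =
                    (INR n * r - INR J) * (1 - r) + INR J * (1 - r) + INR J * r - a * (v + INR J * r)).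
        { unfold v. ring. }
        assert (E2 : a * v = INR J) by (unfold a; field; lra).
        assert (0 <= a * INR J * r) by (apply Rmult_le_pos; [apply Rmult_le_pos; try lra; apply pos_INR| lra]).
        nra. }
      assert (HP0 : 0 <= P (m - j)%nat) by (apply pmf_nonneg; lra).
      assert (HPi : 0 <= P i) by (apply pmf_nonneg; lra).
      assert (Hpos : 0 < INR (n - i) * r).
      { apply Rmult_lt_0_compat; [apply lt_0_INR; lia | lra]. }
      assert (P (m - j)%nat * (1 - a) * (INR (n - i) * r) <= P i * (INR (n - i) * r)).
      { replace (P i * (INR (n - i) * r)) with (P (m - j)%nat * INR (m - j) * (1 - r)) by (rewrite Rt; ring).
        rewrite Rmult_assoc, Rmult_assoc. apply Rmult_le_compat_l; auto. }
      assert (P (m - j)%nat * (1 - a) <= P i).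
      { apply Rmult_le_reg_r with (INR (n - i) * r); auto. }
      simpl pow. assert (0 <= 1 - a) by lra. unfold i in *. nra. }
  assert (Hhalf : forall j, (j <= J)%nat -> P m / 2 <= P (m - j)%nat).
  { intros j Hj. specialize (Hdec j Hj).
    assert (HPm : 0 <= P m) by (apply pmf_nonneg; lra).
    assert ((1 - a) ^ J <= (1 - a) ^ j) by (apply pow_anti; auto; lra).
    pose proof (bernoulli a J Ha).
    assert (INR J * a <= 1/2).
    { unfold a. apply Rmult_le_reg_r with v; [lra|]. unfold Rdiv.
      replace (INR J * (INR J * / v) * v) with (INR J * INR J) by (field; lra). lra. }
    nra. }
  assert (Hsum : INR (S J) * (P m / 2) <= 1).
  { rewrite Rmult_comm, <- sum_cte. rewrite <- (pmf_total n r). fold P.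
    eapply Rle_trans; [|apply (sub_sum P (m - J) J n)].
    - apply sum_Rle. intros j Hj. replace (m - J + j)%nat with (m - (J - j))%nat by lia.
      apply Hhalf; lia.
    - intros; apply pmf_nonneg; lra.
    - lia. }
  rewrite S_INR in Hsum.
  assert (Hsv : sqrt v = sqrt 2 * sqrt (v / 2)).
  { rewrite <- sqrt_mult by lra. f_equal. field. }
  assert (0 < sqrt (v/2)) by (apply sqrt_lt_R0; lra).
  assert (0 < sqrt 2) by (apply sqrt_lt_R0; lra).
  rewrite Hsv. fold (P m).
  apply Rmult_le_reg_r with (sqrt 2 * sqrt (v / 2)). apply Rmult_lt_0_compat; lra.
  replace (2 * sqrt 2 / (sqrt 2 * sqrt (v / 2)) * (sqrt 2 * sqrt (v / 2))) with (2 * sqrt 2) by (field; lra).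
  assert (P m * sqrt (v/2) <= 2).
  { assert (0 <= P m) by (apply pmf_nonneg; lra). nra. }
  nra.
Qed.

Lemma pmf_sym n r k : (k <= n)%nat -> binom_pmf n r k = binom_pmf n (1 - r) (n - k).
Proof.
  intros Hk. unfold binom_pmf. rewrite (pascal_step1 n k Hk).
  replace (n - (n - k))%nat with k by lia. replace (1 - (1 - r)) with r by ring. ring.
Qed.

Lemma maxpmf n r k : 0 < r < 1 -> 1 <= INR n * r * (1 - r) -> (k <= n)%nat ->
  binom_pmf n r k <= 2 * sqrt 2 / sqrt (INR n * r * (1 - r)).
Proof.
  intros Hr Hv Hk.
  destruct (Rle_dec (INR n * r) (INR k)) as [H|H].
  - apply maxpmf_up; auto.
  - rewrite pmf_sym by auto.
    replace (INR n * r * (1 - r)) with (INR n * (1 - r) * (1 - (1 - r))) by ring.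
    apply maxpmf_up; try lra; try lia.
    rewrite minus_INR by auto. lra.
Qed.


Lemma exp_half_le2 t : t <= 1/2 -> exp t <= 2.
Proof.
  intros Ht. apply Rle_trans with (exp (1/2)). apply exp_le; lra.
  assert (E : exp (1/2) * exp (1/2) = exp 1) by (rewrite <- exp_plus; f_equal; lra).
  pose proof exp_le_3. pose proof (exp_pos (1/2)). nra.
Qed.

Lemma tilt_var r t : 0 < r < 1 -> 0 < t <= 1/2 ->
  0 < r * exp t / (r * exp t + (1 - r)) < 1 /\
  r * (1 - r) / 2 <= r * exp t / (r * exp t + (1 - r)) * (1 - r * exp t / (r * exp t + (1 - r))).
Proof.
  intros Hr Ht.
  pose proof (exp_half_le2 t ltac:(lra)).
  assert (He : 1 < exp t) by (rewrite <- exp_0; apply exp_increasing; lra).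
  generalize (exp t) He H. intros e He' He2. clear He H.
  remember (r * e + (1 - r)) as D eqn:HDd.
  assert (HD : 1 <= D) by nra. assert (HDe : D <= e) by nra.
  assert (E1 : 1 - r * e / D = (1 - r) / D) by (rewrite HDd; field; apply Rgt_not_eq; nra).
  assert (0 < r * e) by nra.
  assert (Hr'0 : 0 < r * e / D) by (apply Rdiv_lt_0_compat; lra).
  assert (H1r : 0 < (1 - r) / D) by (apply Rdiv_lt_0_compat; lra).
  split; [lra|].
  rewrite E1.
  replace (r * e / D * ((1 - r) / D)) with (r * (1 - r) * (e / (D * D))) by (field; lra).
  assert (0 < r * (1 - r)) by nra.
  unfold Rdiv at 1. apply Rmult_le_compat_l; [lra|].
  assert (D * D <= 2 * e) by nra.
  apply Rmult_le_reg_r with (D * D); [nra|].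
  unfold Rdiv. rewrite Rmult_assoc, Rinv_l by nra. nra.
Qed.

Lemma tilt_bound n r t k : 0 < r < 1 -> 0 < t <= 1/2 -> 2 <= INR n * r * (1 - r) ->
  (k <= n)%nat ->
  binom_pmf n (r * exp t / (r * exp t + (1 - r))) k <= 4 / sqrt (INR n * r * (1 - r)).
Proof.
  intros Hr Ht Hv Hk.
  destruct (tilt_var r t Hr Ht) as [Hr' Hvar].
  generalize (r * exp t / (r * exp t + (1 - r))) Hr' Hvar. clear Hr' Hvar. intros r' Hr' Hvar.
  assert (Hn : 0 <= INR n) by apply pos_INR.
  assert (Hv' : INR n * r * (1 - r) / 2 <= INR n * r' * (1 - r')).
  { replace (INR n * r * (1 - r) / 2) with (INR n * (r * (1 - r) / 2)) by field.
    rewrite Rmult_assoc. apply Rmult_le_compat_l; auto. }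
  eapply Rle_trans; [apply maxpmf; auto; lra|].
  set (v := INR n * r * (1 - r)) in *.
  set (v' := INR n * r' * (1 - r')) in *.
  assert (Hs : sqrt (v / 2) <= sqrt v') by (apply sqrt_le_1_alt; lra).
  assert (Hsv : sqrt v = sqrt 2 * sqrt (v / 2)).
  { rewrite <- sqrt_mult by lra. f_equal. field. }
  assert (0 < sqrt (v/2)) by (apply sqrt_lt_R0; lra).
  assert (0 < sqrt 2) by (apply sqrt_lt_R0; lra).
  rewrite Hsv.
  assert (0 < sqrt v') by (apply sqrt_lt_R0; lra).
  replace (4 / (sqrt 2 * sqrt (v / 2))) with (2 * sqrt 2 / sqrt (v / 2)).
  2:{ assert (Hss : sqrt 2 * sqrt 2 = 2) by (apply sqrt_sqrt; lra).
        replace 4 with (2 * (sqrt 2 * sqrt 2)) by lra. field.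
        repeat split; apply Rgt_not_eq; lra. }
  unfold Rdiv. apply Rmult_le_compat_l; [lra|]. apply Rinv_le_contravar; lra.
Qed.


Lemma one_minus_exp t : 0 < t <= 1 -> t / 2 <= 1 - exp (- t).
Proof.
  intros Ht. pose proof (exp_ineq1_le t). pose proof (exp_pos t).
  assert (E : exp (- t) = / exp t) by apply exp_Ropp.
  rewrite E.
  assert (/ exp t <= / (1 + t)) by (apply Rinv_le_contravar; lra).
  assert (/ (1 + t) = 1 - t / (1 + t)) by (field; lra).
  assert (t / (1 + t) >= t / 2).
  { unfold Rdiv. apply Rle_ge, Rmult_le_compat_l; [lra|]. apply Rinv_le_contravar; lra. }
  lra.
Qed.

Lemma mgf_pow n p t : 0 <= p <= 1 -> 0 <= t <= 1 ->
  (p * exp t + (1 - p)) ^ n * exp (- (t * (INR n * p))) <=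
  exp (INR n * (p * (1 - p) * t^2 / 2 + p * (1 - p) * t ^ 3)).
Proof.
  intros Hp Ht.
  replace (- (t * (INR n * p))) with (INR n * (- (t * p))) by ring.
  rewrite !exp_nat, <- Rpow_mult_distr.
  apply pow_incr. split.
  - apply Rmult_le_pos; [|left; apply exp_pos]. pose proof (exp_pos t). nra.
  - replace ((p * exp t + (1 - p)) * exp (- (t * p)))
      with (p * exp (t * (1 - p)) + (1 - p) * exp (- (t * p))).
    2:{ replace (t * (1 - p)) with (t + - (t * p)) by ring. rewrite exp_plus. ring. }
    replace (t ^ 3) with (Rabs t ^ 3) by (rewrite Rabs_right by lra; reflexivity).
    apply mgf_bound; auto. rewrite Rabs_right; lra.
Qed.

Lemma final_bound n1 n2 p h x :
  0 < p < 1 -> 0 < h -> x = p * (1 - p) * ((INR n1 + INR n2) / 2) ->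
  2 <= x -> h / (2 * x) <= 1/2 ->
  sum_binom_tail n1 p n2 (1 - p) (INR n1 * p + INR n2 * (1 - p) + h)
   <= 16 * sqrt x / h * exp (- (h ^ 2) / (4 * x) + h ^ 3 / (4 * x ^ 2)).
Proof.
  intros Hp Hh Hx Hx2 Ht.
  set (t := h / (2 * x)) in *.
  assert (Ht0 : 0 < t) by (unfold t; apply Rdiv_lt_0_compat; lra).
  set (a := INR n1 * p + INR n2 * (1 - p) + h).
  set (Pm := 4 / sqrt x).
  assert (Hsx : 0 < sqrt x) by (apply sqrt_lt_R0; lra).
  assert (HPm : 0 <= Pm) by (unfold Pm; apply Rlt_le, Rdiv_lt_0_compat; lra).
  assert (Hpq : 0 < p * (1 - p)) by nra.
  assert (Hbd : forall n r, (r = p \/ r = 1 - p) -> (INR n1 + INR n2) / 2 <= INR n ->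
      forall k, (k <= n)%nat -> binom_pmf n (r * exp t / (r * exp t + (1 - r))) k <= Pm).
  { intros n r Hr Hn k Hk.
    assert (Hvr : r * (1 - r) = p * (1 - p)) by (destruct Hr; subst; ring).
    assert (Hv : x <= INR n * r * (1 - r)).
    { rewrite Rmult_assoc, Hvr, Hx. nra. }
    eapply Rle_trans; [apply tilt_bound; auto; try lra|].
    - unfold Pm. unfold Rdiv. apply Rmult_le_compat_l; [lra|]. apply Rinv_le_contravar; auto.
      apply sqrt_le_1_alt; auto. }
  assert (Step1 : sum_binom_tail n1 p n2 (1 - p) a <=
     (p * exp t + (1 - p)) ^ n1 * ((1 - p) * exp t + (1 - (1 - p))) ^ n2 * Pm *
     (exp (- (t * a)) / (1 - exp (- t)))).
  { destruct (Nat.le_gt_cases n1 n2) as [Hle|Hlt].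
    - apply dtail; auto; try lra.
      apply Hbd; auto. assert (INR n1 <= INR n2) by (apply le_INR; auto). lra.
    - unfold sum_binom_tail. rewrite sum_swap.
      replace ((p * exp t + (1 - p)) ^ n1 * ((1 - p) * exp t + (1 - (1 - p))) ^ n2)
        with (((1 - p) * exp t + (1 - (1 - p))) ^ n2 * (p * exp t + (1 - p)) ^ n1) by ring.
      eapply Rle_trans; [|apply (dtail n2 (1 - p) n1 p t a Pm); auto; try lra].
      + right. apply sum_eq. intros k2 _. apply sum_eq. intros k1 _.
        rewrite (Rplus_comm (INR k1)). ring.
      + apply Hbd; auto. assert (INR n2 <= INR n1) by (apply le_INR; lia). lra. }
  assert (Step2 : (p * exp t + (1 - p)) ^ n1 * ((1 - p) * exp t + (1 - (1 - p))) ^ n2 *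
      exp (- (t * a)) <=
      exp ((INR n1 + INR n2) * (p * (1 - p) * t^2 / 2 + p * (1 - p) * t ^ 3) - t * h)).
  { assert (Ea : exp (- (t * a)) = exp (- (t * (INR n1 * p))) * exp (- (t * (INR n2 * (1 - p)))) *
       exp (- (t * h))).
    { rewrite <- !exp_plus. f_equal. unfold a. ring. }
    rewrite Ea.
    pose proof (mgf_pow n1 p t ltac:(lra) ltac:(lra)) as M1.
    pose proof (mgf_pow n2 (1 - p) t ltac:(lra) ltac:(lra)) as M2.
    replace ((1 - p) * (1 - (1 - p))) with (p * (1 - p)) in M2 by ring.
    replace ((INR n1 + INR n2) * (p * (1 - p) * t^2 / 2 + p * (1 - p) * t ^ 3) - t * h)
      with (INR n1 * (p * (1 - p) * t^2 / 2 + p * (1 - p) * t ^ 3) +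
            INR n2 * (p * (1 - p) * t^2 / 2 + p * (1 - p) * t ^ 3) + - (t * h)) by ring.
    rewrite !exp_plus.
    assert (0 <= (p * exp t + (1 - p)) ^ n1 * exp (- (t * (INR n1 * p)))).
    { apply Rmult_le_pos; [apply pow_le|left; apply exp_pos]. pose proof (exp_pos t). nra. }
    assert (0 <= ((1 - p) * exp t + (1 - (1 - p))) ^ n2 * exp (- (t * (INR n2 * (1 - p))))).
    { apply Rmult_le_pos; [apply pow_le|left; apply exp_pos]. pose proof (exp_pos t). nra. }
    pose proof (exp_pos (- (t * h))).
    replace ((p * exp t + (1 - p)) ^ n1 * ((1 - p) * exp t + (1 - (1 - p))) ^ n2 *
      (exp (- (t * (INR n1 * p))) * exp (- (t * (INR n2 * (1 - p)))) * exp (- (t * h))))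
      with (((p * exp t + (1 - p)) ^ n1 * exp (- (t * (INR n1 * p)))) *
            (((1 - p) * exp t + (1 - (1 - p))) ^ n2 * exp (- (t * (INR n2 * (1 - p))))) *
            exp (- (t * h))) by ring.
    apply Rmult_le_compat_r; [lra|].
    apply Rmult_le_compat; auto. }
  pose proof (one_minus_exp t ltac:(lra)) as Hom.
  assert (Hexpo : (INR n1 + INR n2) * (p * (1 - p) * t^2 / 2 + p * (1 - p) * t ^ 3) - t * h
     = - (h ^ 2) / (4 * x) + h ^ 3 / (4 * x ^ 2)).
  { replace (INR n1 + INR n2) with (2 * (x / (p * (1 - p)))) by (rewrite Hx; field; lra).
    unfold t. field. split; lra. }
  rewrite Hexpo in Step2.
  set (E := exp (- (h ^ 2) / (4 * x) + h ^ 3 / (4 * x ^ 2))) in *.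
  assert (HE : 0 < E) by apply exp_pos.
  eapply Rle_trans; [exact Step1|].
  set (K := (p * exp t + (1 - p)) ^ n1 * ((1 - p) * exp t + (1 - (1 - p))) ^ n2) in *.
  assert (Hq : 0 < 1 - exp (- t)) by lra.
  replace (K * Pm * (exp (- (t * a)) / (1 - exp (- t)))) with
    ((K * exp (- (t * a))) * (Pm / (1 - exp (- t)))) by (field; lra).
  assert (HPq : Pm / (1 - exp (- t)) <= Pm / (t / 2)).
  { unfold Rdiv. apply Rmult_le_compat_l; auto. apply Rinv_le_contravar; lra. }
  assert (0 <= Pm / (1 - exp (- t))) by (apply Rmult_le_pos; auto; left; apply Rinv_0_lt_compat; lra).
  apply Rle_trans with (E * (Pm / (t / 2))).
  { apply Rmult_le_compat; auto. apply Rmult_le_pos; [|left; apply exp_pos].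
    unfold K. apply Rmult_le_pos; apply pow_le; pose proof (exp_pos t); nra. }
  right. unfold Pm, t.
  assert (Hxx : x = sqrt x * sqrt x) by (rewrite sqrt_sqrt; lra).
  set (s := sqrt x) in *. clearbody s. rewrite Hxx.
  field. split; apply Rgt_not_eq; lra.
Qed.


Lemma cube_cv (u : nat -> R) : Un_cv u 0 -> Un_cv (fun m => u m ^ 3 / 4) 0.
Proof.
  intros Hu e He.
  destruct (Hu (Rmin 1 e) ltac:(apply Rmin_glb_lt; lra)) as [N HN].
  exists N. intros n Hn. specialize (HN n Hn). unfold Rdist in *.
  rewrite Rminus_0_r in *.
  assert (H1 : Rabs (u n) < 1) by (eapply Rlt_le_trans; [exact HN| apply Rmin_l]).
  assert (H2 : Rabs (u n) < e) by (eapply Rlt_le_trans; [exact HN| apply Rmin_r]).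
  unfold Rdiv. rewrite Rabs_mult, <- RPow_abs.
  rewrite (Rabs_right (/4)) by lra.
  set (a := Rabs (u n)) in *. assert (0 <= a) by apply Rabs_pos.
  assert (a ^ 3 <= a) by (simpl; nra). lra.
Qed.

Lemma exp3_gt : 12 < exp 3.
Proof.
  assert (E : exp 3 = exp (1/4) ^ 12).
  { rewrite <- exp_nat. f_equal. simpl. lra. }
  rewrite E. pose proof (exp_ineq1_le (1/4)).
  apply Rlt_le_trans with ((1 + 1/4) ^ 12).
  - simpl. lra.
  - apply pow_incr. lra.
Qed.

Lemma Rpower_cube x : 0 < x -> Rpower x (2/3) ^ 3 = x ^ 2.
Proof.
  intros Hx.
  rewrite <- Rpower_pow by (apply exp_pos).
  rewrite Rpower_mult. rewrite <- Rpower_pow by auto. f_equal. simpl. field.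
Qed.

Theorem mainTheorem12 (n1 n2 : nat -> nat) (p h : nat -> R) :
  (forall m, 0 <= p m <= 1) ->
  cv_infty (fun m => Npar (n1 m) (n2 m)) ->
  cv_infty (fun m => p m * (1 - p m) * Npar (n1 m) (n2 m)) ->
  (exists M, forall m, (M <= m)%nat ->
     2 * sqrt (2 * p m * (1 - p m) * Npar (n1 m) (n2 m)) < h m) ->
  Un_cv (fun m => h m / Rpower (p m * (1 - p m) * Npar (n1 m) (n2 m)) (2 / 3)) 0 ->
  Un_cv (fun m => Spar (n1 m) (n2 m) * h m /
            (Npar (n1 m) (n2 m) * sqrt (p m * (1 - p m) * Npar (n1 m) (n2 m)))) 0 ->
  exists eps : nat -> R, Un_cv eps 0 /\
    exists M, forall m, (M <= m)%nat ->
      sum_binom_tail (n1 m) (p m) (n2 m) (1 - p m)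
        (INR (n1 m) * p m + INR (n2 m) * (1 - p m) + h m)
      < sqrt (2 * p m * (1 - p m) * Npar (n1 m) (n2 m)) / h m *
        exp (- (h m ^ 2) / (4 * p m * (1 - p m) * Npar (n1 m) (n2 m)) + 3 + eps m).
Proof.
  intros Hp _ Hx [M0 Hh] Hcv _.
  exists (fun m => (h m / Rpower (p m * (1 - p m) * Npar (n1 m) (n2 m)) (2 / 3)) ^ 3 / 4).
  split; [apply (cube_cv (fun m => h m / Rpower (p m * (1 - p m) * Npar (n1 m) (n2 m)) (2 / 3))); exact Hcv|].
  destruct (Hx 2) as [M1 HM1].
  destruct (Hcv 1 ltac:(lra)) as [M2 HM2].
  exists (M0 + M1 + M2)%nat. intros m Hm.
  specialize (Hh m ltac:(lia)). specialize (HM1 m ltac:(lia)). specialize (HM2 m ltac:(lia)).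
  specialize (Hp m).
  set (N := Npar (n1 m) (n2 m)) in *.
  set (x := p m * (1 - p m) * N) in *.
  set (hh := h m) in *.
  set (pp := p m) in *.
  assert (Hpp : 0 < pp < 1).
  { split.
    - destruct (Req_dec pp 0) as [E|E]; [unfold x in HM1; rewrite E in HM1; lra| lra].
    - destruct (Req_dec pp 1) as [E|E]; [unfold x in HM1; rewrite E in HM1; lra| lra]. }
  assert (Hsq : 0 <= sqrt (2 * pp * (1 - pp) * N)) by apply sqrt_pos.
  assert (Hh0 : 0 < hh) by lra.
  set (RR := Rpower x (2/3)) in *.
  assert (HR : 0 < RR) by apply exp_pos.
  assert (HRx : RR <= x).
  { unfold RR. rewrite <- (Rpower_1 x) at 2 by lra. apply Rle_Rpower; lra. }
  assert (HhR : hh < RR).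
  { unfold Rdist in HM2. rewrite Rminus_0_r in HM2.
    assert (hh / RR < 1) by (eapply Rle_lt_trans; [apply Rle_abs|exact HM2]).
    apply Rmult_lt_reg_r with (/ RR). apply Rinv_0_lt_compat; auto.
    rewrite Rinv_r by lra. exact H. }
  assert (Hxdef : x = pp * (1 - pp) * ((INR (n1 m) + INR (n2 m)) / 2)) by reflexivity.
  pose proof (final_bound (n1 m) (n2 m) pp hh x Hpp Hh0 Hxdef ltac:(lra)) as FB.
  assert (Ht : hh / (2 * x) <= 1 / 2).
  { apply Rmult_le_reg_r with (2 * x); [lra|].
    unfold Rdiv. rewrite Rmult_assoc, Rinv_l by lra. lra. }
  specialize (FB Ht).
  eapply Rle_lt_trans; [exact FB|].
  assert (E1 : (hh / RR) ^ 3 / 4 = hh ^ 3 / (4 * x ^ 2)).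
  { unfold RR. unfold Rdiv. rewrite Rpow_mult_distr, pow_inv. fold RR.
    unfold RR. rewrite Rpower_cube by lra. field. lra. }
  rewrite E1.
  replace (4 * pp * (1 - pp) * N) with (4 * x) by (unfold x; ring).
  replace (2 * pp * (1 - pp) * N) with (2 * x) by (unfold x; ring).
  rewrite sqrt_mult by lra.
  replace (- (hh ^ 2) / (4 * x) + 3 + hh ^ 3 / (4 * x ^ 2))
    with ((- (hh ^ 2) / (4 * x) + hh ^ 3 / (4 * x ^ 2)) + 3) by ring.
  rewrite (exp_plus (- (hh ^ 2) / (4 * x) + hh ^ 3 / (4 * x ^ 2)) 3).
  set (E := exp (- (hh ^ 2) / (4 * x) + hh ^ 3 / (4 * x ^ 2))).
  assert (HE : 0 < E) by apply exp_pos.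
  assert (Hs2 : 1.4 < sqrt 2).
  { assert (sqrt 2 * sqrt 2 = 2) by (apply sqrt_sqrt; lra). pose proof (sqrt_pos 2). nra. }
  pose proof exp3_gt.
  assert (Hsx : 0 < sqrt x) by (apply sqrt_lt_R0; lra).
  assert (16 < sqrt 2 * exp 3) by nra.
  assert (K : 0 < sqrt x / hh * E) by (apply Rmult_lt_0_compat; auto; apply Rdiv_lt_0_compat; auto).
  replace (16 * sqrt x / hh * E) with (16 * (sqrt x / hh * E)) by (field; apply Rgt_not_eq; lra).
  replace (sqrt 2 * sqrt x / hh * (E * exp 3)) with ((sqrt 2 * exp 3) * (sqrt x / hh * E)) by (field; apply Rgt_not_eq; lra).
  apply Rmult_lt_compat_r; auto.
Qed.
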